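(* Let $\mathfrak g$ be a complex vector space equipped with a bilinear multiplication $[\ ,\ ]:\mathfrak g\otimes\mathfrak g\to\mathfrak g$, and let $\tilde{\mathfrak g}=\mathfrak g\oplus\mathbb C$. For $\lambda\in\mathbb C$ define $\mathfrak R(\lambda):\tilde{\mathfrak g}\otimes\tilde{\mathfrak g}\to\tilde{\mathfrak g}\otimes\tilde{\mathfrak g}$ by $\mathfrak R(\lambda)\big((x+\alpha)\otimes(y+\beta)\big)=(y+\beta)\otimes(x+\alpha)+[x,y]\otimes\lambda$ for $x,y\in\mathfrak g$, $\alpha,\beta\in\mathbb C$. Let $\sigma:\tilde{\mathfrak g}\otimes\tilde{\mathfrak g}\to\tilde{\mathfrak g}\otimes\tilde{\mathfrak g}$ be the flip $u\otimes v\mapsto v\otimes u$ and set $\mathfrak R_{21}(\lambda)=\sigma\,\mathfrak R(\lambda)\,\sigma$. Then for every $\lambda\in\mathbb C$, $$\mathfrak R(\lambda)\mathfrak R_{21}(-\lambda)=\mathfrak R_{21}(\lambda)\mathfrak R(-\lambda)=1.$$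
   Context: All tensor products are over $\mathbb C$; $\lambda$ and $[x,y]$ are regarded as elements of $\tilde{\mathfrak g}=\mathfrak g\oplus\mathbb C$ via the obvious inclusions. *)

(* Defs.v *)
From HB Require Import structures.
From mathcomp Require Import all_boot all_order all_algebra.
From mathcomp Require Import reals.
From mathcomp.real_closed Require Import complex.
Set Implicit Arguments. Unset Strict Implicit. Unset Printing Implicit Defensive.
Import Order.TTheory GRing.Theory Num.Theory.
Local Open Scope ring_scope.

Definition is_bilinear (K : pzRingType) (V1 V2 W : lmodType K)
  (f : V1 -> V2 -> W) : Prop :=
  (forall (a : K) (x x' : V1) (y : V2), f (a *: x + x') y = a *: f x y + f x' y) /\
  (forall (a : K) (x : V1) (y y' : V2), f x (a *: y + y') = a *: f x y + f x y').

(* g~ = g (+) K, as the product module g * K (K acting on itself) *)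
Definition gtilde (K : pzRingType) (g : lmodType K) : lmodType K :=
  (g * K^o)%type.

Definition is_tensor_product (K : pzRingType) (V T : lmodType K)
  (tens : V -> V -> T) : Prop :=
  is_bilinear tens /\
  forall (W : lmodType K) (f : V -> V -> W), is_bilinear f ->
    (exists h : {linear T -> W}, forall u v, h (tens u v) = f u v) /\
    (forall h1 h2 : {linear T -> W},
        (forall u v, h1 (tens u v) = h2 (tens u v)) -> h1 =1 h2).

(* Main.v *)
Require Import Defs.
From HB Require Import structures.
From mathcomp Require Import all_boot all_order all_algebra.
From mathcomp Require Import reals.
From mathcomp.real_closed Require Import complex.
Import GRing.Theory.
Local Open Scope ring_scope.
Local Open Scope complex_scope.

Theorem lemma1p1p2 (R : realType) (g : lmodType R[i]) (br : g -> g -> g)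
  (Hbr : is_bilinear br)
  (T : lmodType R[i]) (tens : gtilde g -> gtilde g -> T)
  (HT : is_tensor_product tens)
  (sigma : {linear T -> T})
  (Hsigma : forall u v : gtilde g, sigma (tens u v) = tens v u)
  (frakR : R[i] -> {linear T -> T})
  (HfrakR : forall (lam : R[i]) (x y : g) (alpha beta : R[i]),
      frakR lam (tens (x, alpha) (y, beta)) =
        tens (y, beta) (x, alpha) + tens (br x y, 0) (0, lam)) :
  let frakR21 := fun lam : R[i] => sigma \o frakR lam \o sigma in
  forall lam : R[i],
    (frakR lam \o frakR21 (- lam) =1 id) /\ (frakR21 lam \o frakR (- lam) =1 id).
Proof.
move=> frakR21 lam.
have [[HtL HtR] Huniv] := HT.
have [HbL HbR] := Hbr.
have br0 : forall z, br 0 z = 0.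
  move=> z; have := HbL (-1) 0 0 z.
  by rewrite scaleN1r oppr0 addr0 => ->; rewrite scaleN1r addNr.
have t0L : forall v, tens 0 v = 0.
  move=> v; have := HtL (-1) 0 0 v.
  by rewrite scaleN1r oppr0 addr0 => ->; rewrite scaleN1r addNr.
have t0R : forall u, tens u 0 = 0.
  move=> u; have := HtR (-1) u 0 0.
  by rewrite scaleN1r oppr0 addr0 => ->; rewrite scaleN1r addNr.
have tN : forall (z : g) (l : R[i]),
    tens (z, 0) (0, l) + tens (z, 0) (0, - l) = 0.
  move=> z l; rewrite -[tens (z,0) (0,l)]scale1r -HtR.
  have -> : (1 *: ((0 : g), l) + (0, - l) : gtilde g) = 0.
    by rewrite scale1r; congr (_, _); rewrite /= ?addr0 ?subrr.
  exact: t0R.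
have tN' : forall (z : g) (l : R[i]),
    tens (0, l) (z, 0) + tens (0, - l) (z, 0) = 0.
  move=> z l; rewrite -[tens (0,l) (z,0)]scale1r -HtL.
  have -> : (1 *: ((0 : g), l) + (0, - l) : gtilde g) = 0.
    by rewrite scale1r; congr (_, _); rewrite /= ?addr0 ?subrr.
  exact: t0L.
have z00 : ((0 : g), (0 : R[i])) = (0 : gtilde g) by [].
split.
- have := (Huniv T tens (conj HtL HtR)).2 (frakR lam \o frakR21 (- lam)) idfun.
  apply => -[x a] [y b] /=.
  rewrite /frakR21 /= Hsigma (HfrakR (-lam) y x b a) linearD !Hsigma /=.
  rewrite linearD (HfrakR lam y x b a) (HfrakR lam 0 (br y x) (-lam) 0).
  by rewrite br0 z00 t0L addr0 -addrA tN addr0.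
- have := (Huniv T tens (conj HtL HtR)).2 (frakR21 lam \o frakR (- lam)) idfun.
  apply => -[x a] [y b] /=.
  rewrite /frakR21 /= (HfrakR (-lam) x y a b) linearD Hsigma Hsigma /= linearD.
  rewrite (HfrakR lam x y a b) (HfrakR lam 0 (br x y) (-lam) 0).
  rewrite br0 z00 !linearD !Hsigma t0R addr0.
  by rewrite -addrA (tN' (br x y) lam) addr0.
Qed.
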